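(* Let $\Lambda$ be a row-finite $k$-graph with no sources and $R$ a commutative ring with $1$. Let $a$ be a nonzero element of the center $Z(\mathrm{KP}_R(\Lambda))$, written in normal form $a=\sum_{(\alpha,\beta)\in F}r_{\alpha,\beta}s_\alpha s_{\beta^*}$. Then: (1) for every $(\sigma,\tau)\in F$, $r(\sigma)=r(\tau)$; (2) setting $W=\{v\in\Lambda^0:\ v=r(\beta)\text{ for some }(\alpha,\beta)\in F\}$, if $\mu\in\Lambda$ satisfies $s(\mu)\in W$ then $r(\mu)\in W$; (3) for every $(\sigma,\tau)\in F$ there is $(\alpha,\beta)\in F$ with $r(\alpha)=r(\beta)=s(\sigma)=s(\tau)$; (4) there exist $l\in\mathbb{N}\setminus\{0\}$ and $(\alpha_1,\beta_1),\dots,(\alpha_l,\beta_l)\in F$ such that the composite $\beta_1\cdots\beta_l$ is defined and is a closed path, i.e. $r(\beta_1\cdots\beta_l)=s(\beta_1\cdots\beta_l)$.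
   Context: A $k$-graph is a countable category $\Lambda$ with a functor $d:\Lambda\to\mathbb{N}^k$ ($\mathbb{N}^k$ a one-object category under addition) with unique factorization: whenever $d(\lambda)=m+n$ there are unique $\mu,\nu$ with $d(\mu)=m,d(\nu)=n,\lambda=\mu\nu$. $\Lambda^0$ = vertices (degree-$0$ morphisms), $\Lambda^n=d^{-1}(n)$, $r,s$ range and source, $\lambda\mu$ defined when $s(\lambda)=r(\mu)$, $v\Lambda^n=\{\lambda\in\Lambda^n:r(\lambda)=v\}$. Row-finite: $v\Lambda^n$ finite; no sources: $v\Lambda^n\ne\emptyset$. Kumjian-Pask $\Lambda$-family in an $R$-algebra $A$: $P:\Lambda^0\to A$, $S:\Lambda^{\ne0}\cup\{\lambda^*:\lambda\in\Lambda^{\neq0}\}\to A$ with (KP1) $P_v$ mutually orthogonal idempotents; (KP2) for $r(\mu)=s(\lambda)$: $S_\lambda S_\mu=S_{\lambda\mu}$, $S_{\mu^*}S_{\lambda^*}=S_{(\lambda\mu)^*}$, $P_{r(\lambda)}S_\lambda=S_\lambda=S_\lambda P_{s(\lambda)}$, $P_{s(\lambda)}S_{\lambda^*}=S_{\lambda^*}=S_{\lambda^*}P_{r(\lambda)}$; (KP3) $S_{\lambda^*}S_\mu=\delta_{\lambda,\mu}P_{s(\lambda)}$ when $d(\lambda)=d(\mu)$; (KP4) $P_v=\sum_{\lambda\in v\Lambda^n}S_\lambda S_{\lambda^*}$ for $n\ne0$. $\mathrm{KP}_R(\Lambda)$ is the $R$-algebra generated by a universal such family $(p,s)$; for a vertex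 $v$, $s_v=s_{v^*}=p_v$. Normal form: a nonzero $a\in\mathrm{KP}_R(\Lambda)$ is written in normal form $a=\sum_{(\alpha,\beta)\in F}r_{\alpha,\beta}s_\alpha s_{\beta^*}$ if there is $m\in\mathbb{N}^k$ with $F\subset\Lambda\times\Lambda^m$ finite, every $r_{\alpha,\beta}\in R\setminus\{0\}$, and $s(\alpha)=s(\beta)$ for all $(\alpha,\beta)\in F$. (Every nonzero element admits such a form.) *)

(* Defs.v *)
From HB Require Import structures.
From mathcomp Require Import all_boot all_order all_algebra.
Set Implicit Arguments. Unset Strict Implicit. Unset Printing Implicit Defensive.
Import GRing.Theory.
Local Open Scope ring_scope.

Definition deg (k : nat) := {ffun 'I_k -> nat}.
Definition deg0 (k : nat) : deg k := [ffun _ => 0%N].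
Definition degD (k : nat) (m n : deg k) : deg k := [ffun i => (m i + n i)%N].

(* k-graphs.  A (small) category is described by its set of morphisms        *)
(* [kmor]; objects are identified with identity morphisms.  [kr]/[ks] give   *)
(* the identity morphisms at the range/source, [kcomp l m] is the composite  *)
(* "l m" (only meaningful when ks l = kr m), [kd] is the degree functor.     *)
Record kgraph (k : nat) := KGraph {
  kmor : countType;
  kr : kmor -> kmor;
  ks : kmor -> kmor;
  kcomp : kmor -> kmor -> kmor;
  kd : kmor -> deg k;
  kr_r : forall l, kr (kr l) = kr l;
  ks_r : forall l, ks (kr l) = kr l;
  kr_s : forall l, kr (ks l) = ks l;
  ks_s : forall l, ks (ks l) = ks l;
  kcomp_id_l : forall l, kcomp (kr l) l = l;
  kcomp_id_r : forall l, kcomp l (ks l) = l;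
  kr_comp : forall l m, ks l = kr m -> kr (kcomp l m) = kr l;
  ks_comp : forall l m, ks l = kr m -> ks (kcomp l m) = ks m;
  kcompA : forall l m n, ks l = kr m -> ks m = kr n ->
    kcomp l (kcomp m n) = kcomp (kcomp l m) n;
  kd_id : forall l, kd (kr l) = deg0 k;
  kd_comp : forall l m, ks l = kr m -> kd (kcomp l m) = degD (kd l) (kd m);
  kfact : forall l (m n : deg k), kd l = degD m n ->
    exists mu nu, [/\ kd mu = m, kd nu = n, ks mu = kr nu & l = kcomp mu nu];
  kfact_uniq : forall (m n : deg k) mu nu mu' nu',
    kd mu = m -> kd nu = n -> ks mu = kr nu ->
    kd mu' = m -> kd nu' = n -> ks mu' = kr nu' ->
    kcomp mu nu = kcomp mu' nu' -> mu = mu' /\ nu = nu'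
}.

Section KGraphDefs.
Variables (k : nat) (G : kgraph k).

Definition is_vertex (v : kmor G) : bool := kd v == deg0 k.

Definition row_finite : Prop :=
  forall (v : kmor G) (n : deg k), exists s : seq (kmor G),
    forall l, (l \in s) = (kr l == v) && (kd l == n).

Definition no_sources : Prop :=
  forall (v : kmor G) (n : deg k), is_vertex v ->
    exists l, kr l = v /\ kd l = n.

(* Kumjian-Pask families in a (unital) R-algebra B.  P is used on vertices, *)
(* S and Sst (= S_{lambda^*}) on morphisms of nonzero degree.               *)
Variables (R : comNzRingType) (B : algType R).

Definition is_KP_family (P S Sst : kmor G -> B) : Prop :=
  [/\
      ((forall v, is_vertex v -> P v * P v = P v) /\
       (forall v w, is_vertex v -> is_vertex w -> v != w -> P v * P w = 0)),
      (forall l m, ~~ is_vertex l -> ~~ is_vertex m -> kr m = ks l ->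
         S l * S m = S (kcomp l m) /\ Sst m * Sst l = Sst (kcomp l m)),
      (forall l, ~~ is_vertex l ->
         [/\ P (kr l) * S l = S l, S l * P (ks l) = S l,
             P (ks l) * Sst l = Sst l & Sst l * P (kr l) = Sst l]),
      (forall l m, ~~ is_vertex l -> ~~ is_vertex m -> kd l = kd m ->
         Sst l * S m = (if l == m then P (ks l) else 0)) &
      (forall v (n : deg k), is_vertex v -> n != deg0 k ->
         forall s : seq (kmor G), uniq s ->
         (forall l, (l \in s) = (kr l == v) && (kd l == n)) ->
         P v = \sum_(l <- s) S l * Sst l)].

Definition sK (P S : kmor G -> B) (l : kmor G) : B :=
  if is_vertex l then P l else S l.
Definition sKs (P Sst : kmor G -> B) (l : kmor G) : B :=
  if is_vertex l then P l else Sst l.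

Inductive KPgen (P S Sst : kmor G -> B) : B -> Prop :=
  | KPgen_P v : is_vertex v -> KPgen P S Sst (P v)
  | KPgen_S l : ~~ is_vertex l -> KPgen P S Sst (S l)
  | KPgen_Sst l : ~~ is_vertex l -> KPgen P S Sst (Sst l)
  | KPgen_0 : KPgen P S Sst 0
  | KPgen_add x y : KPgen P S Sst x -> KPgen P S Sst y -> KPgen P S Sst (x + y)
  | KPgen_mul x y : KPgen P S Sst x -> KPgen P S Sst y -> KPgen P S Sst (x * y)
  | KPgen_scale (c : R) x : KPgen P S Sst x -> KPgen P S Sst (c *: x).

End KGraphDefs.

Definition unital_alg_hom (R : comNzRingType) (A B : algType R) (f : A -> B) : Prop :=
  [/\ forall x y, f (x + y) = f x + f y,
      forall x y, f (x * y) = f x * f y,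
      forall (c : R) x, f (c *: x) = c *: f x &
      f 1 = 1].

(* KP_R(Lambda).  Since MathComp algebras are unital while KP_R(Lambda) is   *)
(* in general not, we describe the unitization: a unital R-algebra A with a *)
(* KP family (P,S,Sst) such that                                            *)
(*  - A = R.1 + <family>  (the family generates A as a unital algebra), and *)
(*  - for every KP family in every unital R-algebra B there is a unique     *)
(*    unital R-algebra homomorphism A -> B mapping the family to it.        *)
(* Then KP_R(Lambda) is the non-unital subalgebra [KPgen P S Sst] of A.     *)
Definition is_KP_algebra (k : nat) (G : kgraph k) (R : comNzRingType) (A : algType R)
    (P S Sst : kmor G -> A) : Prop :=
  [/\ is_KP_family P S Sst,
      (forall x : A, exists (c : R) (y : A), KPgen P S Sst y /\ x = c%:A + y) &
      (forall (B : algType R) (Q T Tst : kmor G -> B), is_KP_family Q T Tst ->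
         (exists f : A -> B, unital_alg_hom f /\
            [/\ forall v, is_vertex v -> f (P v) = Q v,
                forall l, ~~ is_vertex l -> f (S l) = T l &
                forall l, ~~ is_vertex l -> f (Sst l) = Tst l]) /\
         (forall f g : A -> B, unital_alg_hom f -> unital_alg_hom g ->
            (forall v, is_vertex v -> f (P v) = g (P v)) ->
            (forall l, ~~ is_vertex l -> f (S l) = g (S l)) ->
            (forall l, ~~ is_vertex l -> f (Sst l) = g (Sst l)) ->
            forall x, f x = g x))].

Definition in_KP_center (k : nat) (G : kgraph k) (R : comNzRingType) (A : algType R)
    (P S Sst : kmor G -> A) (a : A) : Prop :=
  KPgen P S Sst a /\ (forall b, KPgen P S Sst b -> a * b = b * a).

Definition kcomp_seq (k : nat) (G : kgraph k) (b0 : kmor G) (bs : seq (kmor G)) : kmor G :=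
  foldl (@kcomp k G) b0 bs.
Definition composable_seq (k : nat) (G : kgraph k) (b0 : kmor G) (bs : seq (kmor G)) : bool :=
  path (fun x y => ks x == kr y) b0 bs.

(* Main.v *)
Require Import Defs.
From HB Require Import structures.
From mathcomp Require Import all_boot all_order all_algebra.
From mathcomp Require Import boolp zify.
Set Implicit Arguments. Unset Strict Implicit. Unset Printing Implicit Defensive.
Import GRing.Theory.

Module M_kg.

Section Deg.
Variable k : nat.
Definition dle (p q : deg k) := [forall i, p i <= q i].
Definition degB (q p : deg k) : deg k := [ffun i => q i - p i].
Lemma degDC (p q : deg k) : degD p q = degD q p.
Proof. by apply/ffunP => i; rewrite !ffunE addnC. Qed.
Lemma degDA (p q r : deg k) : degD p (degD q r) = degD (degD p q) r.
Proof. by apply/ffunP => i; rewrite !ffunE addnA. Qed.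
Lemma degD0 (p : deg k) : degD p (deg0 k) = p.
Proof. by apply/ffunP => i; rewrite !ffunE addn0. Qed.
Lemma deg0D (p : deg k) : degD (deg0 k) p = p.
Proof. by apply/ffunP => i; rewrite !ffunE add0n. Qed.
Lemma dleDr (p q : deg k) : dle p (degD p q).
Proof. by apply/forallP => i; rewrite ffunE leq_addr. Qed.
Lemma dleDl (p q : deg k) : dle p (degD q p).
Proof. by apply/forallP => i; rewrite ffunE leq_addl. Qed.
Lemma dle_refl (p : deg k) : dle p p.
Proof. by apply/forallP. Qed.
Lemma dle0 (p : deg k) : dle (deg0 k) p.
Proof. by apply/forallP => i; rewrite ffunE. Qed.
Lemma dle_trans (p q r : deg k) : dle p q -> dle q r -> dle p r.
Proof. by move=> /forallP H1 /forallP H2; apply/forallP => i; apply: leq_trans (H1 i) (H2 i). Qed.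
Lemma degDB (p q : deg k) : dle p q -> degD p (degB q p) = q.
Proof. by move=> /forallP H; apply/ffunP => i; rewrite !ffunE subnKC. Qed.
Lemma degBD (p q : deg k) : degB (degD p q) p = q.
Proof. by apply/ffunP => i; rewrite !ffunE addKn. Qed.
Lemma dleD2 (p q r : deg k) : dle p q -> dle (degD r p) (degD r q).
Proof. by move=> /forallP H; apply/forallP => i; rewrite !ffunE leq_add2l. Qed.
Lemma degD_inj (p q r : deg k) : degD r p = degD r q -> p = q.
Proof. by move=> /(congr1 (fun d => degB d r)); rewrite !degBD. Qed.
End Deg.

Section KG.
Variables (k : nat) (G : kgraph k).
Local Notation kmor := (kmor G).
Local Notation kr := (@kr k G).
Local Notation ks := (@ks k G).
Local Notation kd := (@kd k G).
Local Notation kcomp := (@kcomp k G).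

Lemma kd_s l : kd (ks l) = deg0 k.
Proof. by rewrite -(kr_s l) kd_id. Qed.

Lemma vertex_r l : is_vertex l -> kr l = l.
Proof.
move=> /eqP Hl.
have := @kfact_uniq _ G (deg0 k) (deg0 k) (kr l) l l (ks l) (kd_id l) Hl (ks_r l)
  Hl (kd_s l) (esym (kr_s l)).
by rewrite kcomp_id_l kcomp_id_r => /(_ erefl) [].
Qed.
Lemma vertex_s l : is_vertex l -> ks l = l.
Proof.
move=> /eqP Hl.
have := @kfact_uniq _ G (deg0 k) (deg0 k) (kr l) l l (ks l) (kd_id l) Hl (ks_r l)
  Hl (kd_s l) (esym (kr_s l)).
by rewrite kcomp_id_l kcomp_id_r => /(_ erefl) [].
Qed.
Lemma is_vertex_r l : is_vertex (kr l).
Proof. by rewrite /is_vertex kd_id. Qed.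
Lemma is_vertex_s l : is_vertex (ks l).
Proof. by rewrite /is_vertex kd_s. Qed.

Definition factP (l : kmor) p (mn : kmor * kmor) :=
  [/\ kd mn.1 = p, kd mn.2 = degB (kd l) p, ks mn.1 = kr mn.2 & l = kcomp mn.1 mn.2].

Definition fpair p l : kmor * kmor :=
  if pselect (exists mn, factP l p mn) is left H then projT1 (cid H) else (l, l).
Definition pre p l := (fpair p l).1.
Definition suf p l := (fpair p l).2.

Lemma fpairP p l : dle p (kd l) ->
  [/\ kd (pre p l) = p, kd (suf p l) = degB (kd l) p, ks (pre p l) = kr (suf p l)
    & l = kcomp (pre p l) (suf p l)].
Proof.
move=> Hp; rewrite /pre /suf /fpair; case: pselect => [H|[]].
  by case: (cid H) => mn /=; case: mn => a b [].
have [mu [nu [H1 H2 H3 H4]]] := kfact (esym (degDB Hp)).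
by exists (mu, nu).
Qed.

Lemma pre_deg p l : dle p (kd l) -> kd (pre p l) = p.
Proof. by case/fpairP. Qed.
Lemma suf_deg p l : dle p (kd l) -> kd (suf p l) = degB (kd l) p.
Proof. by case/fpairP. Qed.
Lemma pre_suf p l : dle p (kd l) -> ks (pre p l) = kr (suf p l).
Proof. by case/fpairP. Qed.
Lemma pre_sufE p l : dle p (kd l) -> kcomp (pre p l) (suf p l) = l.
Proof. by case/fpairP=> _ _ _ <-. Qed.

Lemma fact_uniq mu nu : ks mu = kr nu ->
  pre (kd mu) (kcomp mu nu) = mu /\ suf (kd mu) (kcomp mu nu) = nu.
Proof.
move=> H.
have Hd : kd (kcomp mu nu) = degD (kd mu) (kd nu) by rewrite kd_comp.
have Hle : dle (kd mu) (kd (kcomp mu nu)) by rewrite Hd dleDr.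
have [H1 H2 H3 H4] := fpairP Hle.
rewrite Hd degBD in H2.
have := @kfact_uniq _ G (kd mu) (kd nu) _ _ _ _ H1 H2 H3 erefl erefl H.
by move/(_ (esym H4)) => [-> ->].
Qed.
Lemma pre_comp mu nu : ks mu = kr nu -> pre (kd mu) (kcomp mu nu) = mu.
Proof. by case/fact_uniq. Qed.
Lemma suf_comp mu nu : ks mu = kr nu -> suf (kd mu) (kcomp mu nu) = nu.
Proof. by case/fact_uniq. Qed.

Lemma kd_compE mu nu : ks mu = kr nu -> kd (kcomp mu nu) = degD (kd mu) (kd nu).
Proof. exact: kd_comp. Qed.

Lemma pre_r p l : dle p (kd l) -> kr (pre p l) = kr l.
Proof.
move=> H; rewrite -{2}(pre_sufE H) kr_comp //; exact: pre_suf.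
Qed.
Lemma suf_s p l : dle p (kd l) -> ks (suf p l) = ks l.
Proof.
move=> H; rewrite -{2}(pre_sufE H) ks_comp //; exact: pre_suf.
Qed.

Lemma pre0 l : pre (deg0 k) l = kr l.
Proof. by have := @pre_comp (kr l) l (ks_r l); rewrite kd_id kcomp_id_l. Qed.
Lemma suf0 l : suf (deg0 k) l = l.
Proof. by have := @suf_comp (kr l) l (ks_r l); rewrite kd_id kcomp_id_l. Qed.
Lemma pre_full l : pre (kd l) l = l.
Proof. by have := @pre_comp l (ks l) (esym (kr_s l)); rewrite kcomp_id_r. Qed.
Lemma suf_full l : suf (kd l) l = ks l.
Proof. by have := @suf_comp l (ks l) (esym (kr_s l)); rewrite kcomp_id_r. Qed.

Lemma pre_compl p mu nu : ks mu = kr nu -> dle p (kd mu) ->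
  pre p (kcomp mu nu) = pre p mu /\ suf p (kcomp mu nu) = kcomp (suf p mu) nu.
Proof.
move=> H Hp.
have E : kcomp mu nu = kcomp (pre p mu) (kcomp (suf p mu) nu).
  by rewrite kcompA ?pre_sufE ?pre_suf ?suf_s.
have H1 : ks (pre p mu) = kr (kcomp (suf p mu) nu).
  by rewrite kr_comp ?suf_s ?pre_suf.
by rewrite E; have [] := fact_uniq H1; rewrite pre_deg // => -> ->.
Qed.

Lemma pre_pre p q l : dle p q -> dle q (kd l) -> pre p (pre q l) = pre p l.
Proof.
move=> Hpq Hq; rewrite -{2}(pre_sufE Hq).
by case: (pre_compl (pre_suf Hq) (_ : dle p (kd (pre q l)))) => [|->//]; rewrite pre_deg.
Qed.

Lemma pre_compr l z q : ks l = kr z -> dle q (kd z) ->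
  pre (degD (kd l) q) (kcomp l z) = kcomp l (pre q z).
Proof.
move=> H Hq.
have E : kcomp l z = kcomp (kcomp l (pre q z)) (suf q z).
  by rewrite -kcompA ?pre_sufE ?pre_suf ?pre_r.
have H1 : ks (kcomp l (pre q z)) = kr (suf q z).
  by rewrite ks_comp ?pre_suf ?pre_r.
have Hd : kd (kcomp l (pre q z)) = degD (kd l) q by rewrite kd_comp ?pre_r ?pre_deg.
by rewrite E -Hd pre_comp.
Qed.

Lemma suf_suf p q l : dle (degD p q) (kd l) -> suf q (suf p l) = suf (degD p q) l.
Proof.
move=> H.
have Hp : dle p (kd l) by apply: dle_trans H; apply: dleDr.
have Hq : dle q (kd (suf p l)).
  apply/forallP => i; rewrite suf_deg // ffunE.
  by move/forallP: H => /(_ i); rewrite ffunE leq_subRL // ?(forallP Hp).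
have E : l = kcomp (kcomp (pre p l) (pre q (suf p l))) (suf q (suf p l)).
  by rewrite -kcompA ?pre_sufE ?pre_suf ?pre_r.
have H1 : ks (kcomp (pre p l) (pre q (suf p l))) = kr (suf q (suf p l)).
  by rewrite ks_comp ?pre_suf ?pre_r.
have Hd : kd (kcomp (pre p l) (pre q (suf p l))) = degD p q.
  by rewrite kd_comp ?pre_r ?pre_suf // !pre_deg.
by rewrite {2}E -Hd suf_comp.
Qed.


Lemma pre_compE p mu nu : ks mu = kr nu -> kd mu = p -> pre p (kcomp mu nu) = mu.
Proof. by move=> H <-; exact: pre_comp. Qed.
Lemma suf_compE p mu nu : ks mu = kr nu -> kd mu = p -> suf p (kcomp mu nu) = nu.
Proof. by move=> H <-; exact: suf_comp. Qed.

Definition ipath := deg k -> kmor.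
Definition coh (x : ipath) :=
  (forall p, kd (x p) = p) /\ (forall p q, x p = pre p (x (degD p q))).

Lemma coh_le x p q : coh x -> dle p q -> x p = pre p (x q).
Proof. by move=> [_ H] Hpq; rewrite -{1}(degDB Hpq) -H. Qed.
Lemma coh_r x p : coh x -> x (deg0 k) = kr (x p).
Proof. by move=> Hx; rewrite (coh_le Hx (dle0 p)) pre0. Qed.
Lemma coh_dle x p q : coh x -> dle p (kd (x (degD p q))).
Proof. by move=> [H _]; rewrite H dleDr. Qed.

Definition pshift p (x : ipath) : ipath := fun q => suf p (x (degD p q)).
Definition pcat l (x : ipath) : ipath := fun q => pre q (kcomp l (x q)).

Lemma coh_shift p x : coh x -> coh (pshift p x).
Proof.
move=> Hx; split=> [q|q q'].
  by rewrite /pshift suf_deg ?coh_dle // (proj1 Hx) degBD.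
rewrite /pshift.
set L := x (degD p (degD q q')).
have HL : x (degD p q) = pre (degD p q) L.
  by apply: coh_le => //; rewrite degDA dleDr.
have Hle : dle (degD p q) (kd L) by rewrite /L (proj1 Hx) degDA dleDr.
have E : L = kcomp (pre (degD p q) L) (suf (degD p q) L) by rewrite pre_sufE.
have Hp : dle p (kd (pre (degD p q) L)) by rewrite pre_deg // dleDr.
rewrite HL {2}E (proj2 (pre_compl (pre_suf Hle) Hp)).
rewrite pre_compE // ?suf_deg // ?pre_deg ?degBD //.
by rewrite suf_s // pre_suf.
Qed.

Lemma coh_comp x l : coh x -> ks l = x (deg0 k) -> forall q, ks l = kr (x q).
Proof. by move=> Hx H q; rewrite H (coh_r q Hx). Qed.

Lemma coh_cat l x : coh x -> ks l = x (deg0 k) -> coh (pcat l x).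
Proof.
move=> Hx Hl; have Hc := coh_comp Hx Hl.
have Hd : forall q, kd (kcomp l (x q)) = degD (kd l) q.
  by move=> q; rewrite kd_comp ?(proj1 Hx).
split=> [q|q q'].
  by rewrite /pcat pre_deg // Hd dleDl.
rewrite /pcat pre_pre; last by rewrite Hd dleDl.
2: exact: dleDr.
have Hq2 := coh_dle q q' Hx.
have E : x (degD q q') = kcomp (x q) (suf q (x (degD q q'))).
  by rewrite (coh_le Hx (dleDr q q')) pre_sufE.
have Hs : ks (x q) = kr (suf q (x (degD q q'))).
  by rewrite (coh_le Hx (dleDr q q')) pre_suf.
rewrite E kcompA ?Hc //.
rewrite [RHS](proj1 (pre_compl _ _)) //; last by rewrite Hd dleDl.
by rewrite ks_comp ?Hc.
Qed.

Lemma cat_deg l x : coh x -> ks l = x (deg0 k) -> pcat l x (kd l) = l.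
Proof. by move=> Hx Hl; rewrite /pcat pre_comp //; apply: coh_comp. Qed.

Lemma cat_r l x : coh x -> ks l = x (deg0 k) -> pcat l x (deg0 k) = kr l.
Proof. by move=> Hx Hl; rewrite /pcat pre0 kr_comp //; apply: coh_comp. Qed.

Lemma shift_r p x : coh x -> pshift p x (deg0 k) = ks (x p).
Proof. by move=> Hx; rewrite /pshift degD0 -{1}(proj1 Hx p) suf_full. Qed.

Lemma shift_cat l x : coh x -> ks l = x (deg0 k) -> pshift (kd l) (pcat l x) = x.
Proof.
move=> Hx Hl; have Hc := coh_comp Hx Hl.
apply: funext => q; rewrite /pshift /pcat pre_compr ?(proj1 Hx) ?dle_refl //.
  by rewrite -(coh_le Hx (dleDl _ _)) suf_comp.
exact: dleDl.
Qed.

Lemma cat_shift p x : coh x -> pcat (x p) (pshift p x) = x.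
Proof.
move=> Hx; apply: funext => q; rewrite /pcat /pshift.
rewrite {1}(proj2 Hx p q) pre_sufE ?coh_dle //.
by rewrite (proj2 Hx q p) degDC.
Qed.

Lemma cat_cat l m x : coh x -> ks m = x (deg0 k) -> ks l = kr m ->
  pcat l (pcat m x) = pcat (kcomp l m) x.
Proof.
move=> Hx Hm Hlm; have Hc := coh_comp Hx Hm.
apply: funext => q; rewrite /pcat.
have Hq : dle q (kd (kcomp m (x q))) by rewrite kd_comp ?(proj1 Hx) ?Hc // dleDl.
rewrite -kcompA ?Hc //.
rewrite -{2}(pre_sufE Hq) kcompA ?pre_suf ?pre_r ?kr_comp ?Hc //.
rewrite [RHS](proj1 (pre_compl _ _)) //.
  by rewrite ks_comp ?pre_suf // pre_r // kr_comp ?Hc.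
by rewrite kd_comp ?pre_r ?kr_comp ?Hc // pre_deg // dleDl.
Qed.

Lemma shift_shift p q x : coh x -> pshift q (pshift p x) = pshift (degD p q) x.
Proof.
move=> Hx; apply: funext => r; rewrite /pshift suf_suf ?degDA //.
by rewrite (proj1 Hx) dleDr.
Qed.

Lemma coh_comp_iff x l m : coh x -> ks l = kr m ->
  (x (kd (kcomp l m)) = kcomp l m) <-> (x (kd l) = l /\ pshift (kd l) x (kd m) = m).
Proof.
move=> Hx H; rewrite kd_comp //; split.
  move=> E; rewrite /pshift E (coh_le Hx (dleDr _ (kd m))) E.
  by rewrite pre_comp ?suf_comp.
move=> [E1 E2]; rewrite /pshift in E2.
have Hd : dle (kd l) (kd (x (degD (kd l) (kd m)))) by rewrite (proj1 Hx) dleDr.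
by rewrite -[LHS](pre_sufE Hd) E2 -(coh_le Hx (dleDr _ _)) E1.
Qed.


Definition ones (N : nat) : deg k := [ffun _ => N].
Definition maxdeg (p : deg k) := (\max_i p i)%N.
Lemma dle_ones p : dle p (ones (maxdeg p)).
Proof. by apply/forallP => i; rewrite ffunE leq_bigmax. Qed.
Lemma dle_ones2 N M : (N <= M)%N -> dle (ones N) (ones M).
Proof. by move=> H; apply/forallP => i; rewrite !ffunE. Qed.
Lemma maxdeg_mono p q : dle p q -> (maxdeg p <= maxdeg q)%N.
Proof.
move=> /forallP H; apply/bigmax_leqP => i _.
by apply: leq_trans (H i) _; apply: leq_bigmax.
Qed.

Section Exist.
Hypothesis Hns : no_sources G.
Variable u : kmor.
Hypothesis Hu : is_vertex u.

Definition step v : kmor :=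
  if pselect (exists l, kr l = v /\ kd l = ones 1) is left H then projT1 (cid H) else v.
Lemma stepP v : is_vertex v -> kr (step v) = v /\ kd (step v) = ones 1.
Proof.
move=> Hv; rewrite /step; case: pselect => [H|[]]; first by case: (cid H).
exact: Hns.
Qed.

Fixpoint wp (N : nat) : kmor :=
  if N is N'.+1 then kcomp (wp N') (step (ks (wp N'))) else u.

Lemma wp_prop N : kd (wp N) = ones N /\ kr (wp N) = u.
Proof.
elim: N => [|N [IH1 IH2]] /=.
  split; last exact: vertex_r.
  by move/eqP: Hu => ->; apply/ffunP => i; rewrite !ffunE.
have [S1 S2] := stepP (is_vertex_s (wp N)).
rewrite kd_comp ?kr_comp ?S1 // S2 IH1; split=> //.
by apply/ffunP => i; rewrite !ffunE addn1.
Qed.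

Lemma wp_pre N M : (N <= M)%N -> pre (ones N) (wp M) = wp N.
Proof.
elim: M => [|M IH]; first by rewrite leqn0 => /eqP ->; rewrite -(proj1 (wp_prop 0)) pre_full.
rewrite leq_eqVlt => /orP [/eqP ->|]; first by rewrite -(proj1 (wp_prop _)) pre_full.
rewrite ltnS => HNM /=.
have [S1 S2] := stepP (is_vertex_s (wp M)).
rewrite (proj1 (pre_compl _ _)) ?S1 // ?IH //.
by rewrite (proj1 (wp_prop M)) dle_ones2.
Qed.

Definition ypath : ipath := fun p => pre p (wp (maxdeg p)).

Lemma ypath_coh : coh ypath /\ ypath (deg0 k) = u.
Proof.
have Hd : forall p N, (maxdeg p <= N)%N -> dle p (kd (wp N)).
  move=> p N H; rewrite (proj1 (wp_prop N)).
  exact: dle_trans (dle_ones p) (dle_ones2 H).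
split; last by rewrite /ypath pre0 (proj2 (wp_prop _)).
split=> [p|p q]; first by rewrite /ypath pre_deg ?Hd.
rewrite /ypath pre_pre ?dleDr ?Hd //.
have HM : (maxdeg p <= maxdeg (degD p q))%N by apply: maxdeg_mono; apply: dleDr.
rewrite -(wp_pre HM) pre_pre ?dle_ones //.
by rewrite (proj1 (wp_prop _)) dle_ones2.
Qed.
End Exist.

Lemma ipath_exists (Hns : no_sources G) u : is_vertex u ->
  exists y, coh y /\ y (deg0 k) = u.
Proof. by move=> Hu; exists (ypath u); apply: ypath_coh. Qed.

End KG.

End M_kg.
Import M_kg.

Module M_ops.
Local Open Scope ring_scope.

Section Ops.
Variables (R : comNzRingType) (X : Type).

Definition linb (f : (X -> R) -> (X -> R)) : bool :=
  `[< (forall g h, f (fun x => g x + h x) = (fun x => f g x + f h x)) /\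
      (forall c g, f (fun x => c * g x) = (fun x => c * f g x)) >].

Record op := Op { opf :> (X -> R) -> (X -> R); opP : linb opf }.

Lemma op_inj (f g : op) : opf f = opf g -> f = g.
Proof.
case: f g => f fP [g gP] /= E; subst g; congr Op; exact: bool_irrelevance.
Qed.

Lemma opD (f : op) g h : f (fun x => g x + h x) = (fun x => f g x + f h x).
Proof. by case: f => f /= /asboolP []. Qed.
Lemma opZ (f : op) c g : f (fun x => c * g x) = (fun x => c * f g x).
Proof. by case: f => f /= /asboolP []. Qed.
Lemma op0 (f : op) : f (fun _ => 0) = (fun _ => 0).
Proof.
have := opZ f 0 (fun _ => 0); rewrite (_ : (fun _ => 0 * 0) = fun _ : X => 0).
  by move=> ->; apply: funext => x; rewrite mul0r.
by apply: funext => x; rewrite mul0r.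
Qed.
Lemma opN (f : op) g : f (fun x => - g x) = (fun x => - f g x).
Proof.
have := opZ f (-1) g; rewrite (_ : (fun x => -1 * g x) = fun x => - g x).
  by move=> ->; apply: funext => x; rewrite mulN1r.
by apply: funext => x; rewrite mulN1r.
Qed.

HB.instance Definition _ := gen_eqMixin op.
HB.instance Definition _ := gen_choiceMixin op.

Lemma lin_zero : linb (fun _ _ => 0).
Proof. by apply/asboolP; split => *; apply: funext => x; rewrite ?addr0 ?mulr0. Qed.
Definition op_zero := Op lin_zero.
Lemma lin_add (f g : op) : linb (fun h x => f h x + g h x).
Proof.
apply/asboolP; split => *; apply: funext => x; rewrite ?opD ?opZ.
  by rewrite addrACA.
by rewrite mulrDr.
Qed.
Definition op_add f g := Op (lin_add f g).
Lemma lin_opp (f : op) : linb (fun h x => - f h x).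
Proof.
apply/asboolP; split => *; apply: funext => x; rewrite ?opD ?opZ.
  by rewrite opprD.
by rewrite mulrN.
Qed.
Definition op_opp f := Op (lin_opp f).
Lemma lin_one : linb (fun h => h).
Proof. by apply/asboolP; split. Qed.
Definition op_one := Op lin_one.
Lemma lin_mul (f g : op) : linb (fun h => f (g h)).
Proof. by apply/asboolP; split => *; rewrite ?opD ?opZ. Qed.
Definition op_mul f g := Op (lin_mul f g).
Lemma lin_scale c (f : op) : linb (fun h x => c * f h x).
Proof.
apply/asboolP; split => *; apply: funext => x; rewrite ?opD ?opZ.
  by rewrite mulrDr.
by rewrite mulrCA.
Qed.
Definition op_scale c f := Op (lin_scale c f).

Ltac opext := move=> *; apply: op_inj; apply: funext => ?; apply: funext => ?; rewrite /=.

Lemma op_addA : associative op_add. Proof. by opext; rewrite addrA. Qed.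
Lemma op_addC : commutative op_add. Proof. by opext; rewrite addrC. Qed.
Lemma op_add0 : left_id op_zero op_add. Proof. by opext; rewrite add0r. Qed.
Lemma op_addN : left_inverse op_zero op_opp op_add. Proof. by opext; rewrite addNr. Qed.
HB.instance Definition _ := GRing.isZmodule.Build op op_addA op_addC op_add0 op_addN.


End Ops.

Definition opx (R : comNzRingType) (X : Type) (x0 : X) : Type := op R X.

Section Ops2.
Variables (R : comNzRingType) (X : Type) (x0 : X).
Local Notation opx := (opx R x0).
HB.instance Definition _ := Choice.on opx.
HB.instance Definition _ := GRing.Zmodule.on opx.
Local Notation op_one := (@op_one R X).
Local Notation op_mul := (@op_mul R X).
Local Notation op_scale := (@op_scale R X).
Ltac opext := move=> *; apply: op_inj; apply: funext => ?; apply: funext => ?; rewrite /=.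

Lemma op_mulA : associative (op_mul : opx -> opx -> opx). Proof. by opext. Qed.
Lemma op_mul1 : left_id (op_one : opx) op_mul. Proof. by opext. Qed.
Lemma op_mul1r : right_id (op_one : opx) op_mul. Proof. by opext. Qed.
Lemma op_mulDl : left_distributive (op_mul : opx -> opx -> opx) (@GRing.add opx). Proof. by opext. Qed.
Lemma op_mulDr : right_distributive (op_mul : opx -> opx -> opx) (@GRing.add opx).
Proof. by move=> f g h; apply: op_inj; apply: funext => u /=; rewrite opD. Qed.
Lemma op_one_neq0 : (op_one : opx) != 0.
Proof.
apply/eqP => /(congr1 (fun f : opx => opf f (fun _ => 1) x0)) /=; apply/eqP; exact: oner_neq0.
Qed.
HB.instance Definition _ := GRing.Zmodule_isNzRing.Build opx op_mulA op_mul1 op_mul1r op_mulDl op_mulDr op_one_neq0.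

Lemma op_scaleA a b (f : opx) : op_scale a (op_scale b f) = op_scale (a * b) f.
Proof. by opext; rewrite mulrA. Qed.
Lemma op_scale1 : left_id 1 (op_scale : R -> opx -> opx). Proof. by opext; rewrite mul1r. Qed.
Lemma op_scaleDr : right_distributive (op_scale : R -> opx -> opx) (@GRing.add opx). Proof. by opext; rewrite mulrDr. Qed.
Lemma op_scaleDl (f : opx) : {morph op_scale^~ f : a b / a + b}. Proof. by opext; rewrite mulrDl. Qed.
HB.instance Definition _ := GRing.Zmodule_isLmodule.Build R opx op_scaleA op_scale1 op_scaleDr op_scaleDl.
Lemma op_scaleAl a (f g : opx) : a *: (f * g) = (a *: f) * g. Proof. by opext. Qed.
HB.instance Definition _ := GRing.Lmodule_isLalgebra.Build R opx op_scaleAl.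
Lemma op_scaleAr a (f g : opx) : a *: (f * g) = f * (a *: g).
Proof. by apply: op_inj; apply: funext => u /=; rewrite opZ. Qed.
HB.instance Definition _ := GRing.Lalgebra_isAlgebra.Build R opx op_scaleAr.

End Ops2.


Section OpsE.
Variables (R : comNzRingType) (X : Type) (x0 : X).
Local Notation op := (opx R x0).
Lemma opfM (f g : op) : opf (f * g) = fun h => f (g h). Proof. by []. Qed.
Lemma opfD (f g : op) : opf (f + g) = fun h x => f h x + g h x. Proof. by []. Qed.
Lemma opf0 : opf (0 : op) = fun h x => 0. Proof. by []. Qed.
Lemma opf1 : opf (1 : op) = fun h => h. Proof. by []. Qed.
Lemma opfZ c (f : op) : opf (c *: f) = fun h x => c * f h x. Proof. by []. Qed.
Lemma op_eqP (f g : op) : (forall h x, f h x = g h x) -> f = g.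
Proof. by move=> H; apply: op_inj; apply: funext => h; apply: funext => x; apply: H. Qed.
Lemma opf_sum (I : Type) (s : seq I) (P : pred I) (F : I -> op) h x :
  (\sum_(i <- s | P i) F i) h x = \sum_(i <- s | P i) F i h x.
Proof.
elim: s => [|i s IH]; first by rewrite !big_nil.
by rewrite !big_cons; case: (P i); rewrite ?opfD IH.
Qed.
End OpsE.

End M_ops.
Import M_ops.

Module M_rep.
Local Open Scope ring_scope.

Section Counters.
Variable k : nat.
Local Notation zt := {ffun 'I_k -> int}.
Definition zadd (z : zt) (p : deg k) : zt := [ffun i => z i + (p i)%:Z].
Definition zsub (z : zt) (p : deg k) : zt := [ffun i => z i - (p i)%:Z].
Lemma zsub2 z p q : zsub (zsub z p) q = zsub z (degD p q).
Proof. by apply/ffunP => i; rewrite !ffunE PoszD opprD addrA. Qed.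
Lemma zadd2 z l m : zadd (zadd z m) l = zadd z (degD l m).
Proof. by apply/ffunP => i; rewrite !ffunE PoszD (addrC (l i)%:Z) addrA. Qed.
Lemma zsubK z p : zsub (zadd z p) p = z.
Proof. by apply/ffunP => i; rewrite !ffunE addrK. Qed.
Lemma zaddK z p : zadd (zsub z p) p = z.
Proof. by apply/ffunP => i; rewrite !ffunE subrK. Qed.
Lemma zsub_eq0 p q : (zsub (zadd 0 p) q == 0) = (p == q).
Proof.
apply/eqP/eqP => [H|->]; last by apply/ffunP => i; rewrite !ffunE add0r subrr.
apply/ffunP => i; move/ffunP: H => /(_ i); rewrite !ffunE add0r => /eqP.
by rewrite subr_eq0 => /eqP [].
Qed.
Lemma zadd_eq0 p : (zadd 0 p == 0) = (p == deg0 k).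
Proof.
apply/eqP/eqP => [H|->]; last by apply/ffunP => i; rewrite !ffunE add0r.
apply/ffunP => i; move/ffunP: H => /(_ i); rewrite !ffunE add0r.
by move=> [].
Qed.
End Counters.

Section Rep.
Variables (k : nat) (G : kgraph k) (R : comNzRingType) (l0 : kmor G).
Local Notation kmor := (kmor G).
Local Notation kr := (@kr k G).
Local Notation ks := (@ks k G).
Local Notation kd := (@kd k G).
Local Notation kcomp := (@kcomp k G).
Definition Xt := (ipath G * {ffun 'I_k -> int})%type.
Definition xx0 : Xt := (fun _ => l0, 0).
Definition Bt := opx R xx0.

Definition tm (l : kmor) (g : Xt -> R) : Xt -> R := fun xz =>
  let: (x, z) := xz in
  if `[< coh x /\ x (kd l) = l >] then g (pshift (kd l) x, zsub z (kd l)) else 0.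
Definition ts (l : kmor) (g : Xt -> R) : Xt -> R := fun xz =>
  let: (x, z) := xz in
  if `[< coh x /\ ks l = x (deg0 k) >] then g (pcat l x, zadd z (kd l)) else 0.
Definition qv (v : kmor) (g : Xt -> R) : Xt -> R := fun xz =>
  let: (x, z) := xz in
  if `[< coh x /\ x (deg0 k) = v >] then g (x, z) else 0.

Ltac linproof := apply/asboolP; split => *; apply: funext => -[x z];
  case: ifP => _; rewrite ?addr0 ?mulr0.
Lemma tm_lin l : linb (tm l). Proof. by rewrite /tm; linproof. Qed.
Lemma ts_lin l : linb (ts l). Proof. by rewrite /ts; linproof. Qed.
Lemma qv_lin l : linb (qv l). Proof. by rewrite /qv; linproof. Qed.
Definition Tm l : Bt := Op (tm_lin l).
Definition Ts l : Bt := Op (ts_lin l).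
Definition Qv l : Bt := Op (qv_lin l).

Lemma asbT (P : Prop) : P -> `[< P >] = true. Proof. by move=> H; apply/asboolP. Qed.
Lemma asbF (P : Prop) : ~ P -> `[< P >] = false. Proof. by move=> H; apply/asboolP. Qed.

Lemma ifK0 (b : bool) : (if b then (0 : R) else 0) = 0. Proof. by case: b. Qed.

Lemma rep_KP : is_KP_family Qv Tm Ts.
Proof.
split.
- split=> [v Hv|v w Hv Hw Hvw]; apply: op_eqP => h [x z]; rewrite opfM /= /qv /=.
    by case: (asbool _).
  have [[Hx E1]|H] := pselect (coh x /\ x (deg0 k) = v); last by rewrite asbF.
  rewrite (asbT (conj Hx E1)) asbF // => -[_ E2]; by move: Hvw; rewrite -E1 -E2 eqxx.
- move=> l m Hl Hm Hlm; split; apply: op_eqP => h [x z]; rewrite opfM /=.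
    rewrite /tm /=.
    have [Hx|Hx] := pselect (coh x); last by rewrite !asbF //; move=> [].
    have Hc := coh_comp_iff Hx (esym Hlm).
    have [E|E] := pselect (x (kd (kcomp l m)) = kcomp l m).
      have [E1 E2] := (proj1 Hc) E.
      rewrite (asbT (conj Hx E1)) (asbT (conj (coh_shift _ Hx) E2)) (asbT (conj Hx E)) /=.
      by rewrite shift_shift // zsub2 kd_comp.
    have NA : ~ (coh x /\ x (kd (kcomp l m)) = kcomp l m) by move=> [].
    rewrite (asbF NA).
    have [[_ E1]|H1] := pselect (coh x /\ x (kd l) = l); last by rewrite asbF.
    rewrite (asbT (conj Hx E1)) asbF // => -[_ E2]; apply: E.
    by apply/(proj2 Hc).
  rewrite /ts /=.
  have [Hx|Hx] := pselect (coh x); last by rewrite !asbF //; move=> [].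
  rewrite ks_comp //.
  have [E|E] := pselect (ks m = x (deg0 k)); last by rewrite !asbF //; move=> [].
  rewrite !asbT //=; last by split; [exact: coh_cat|rewrite cat_r].
  by rewrite cat_cat // zadd2 kd_comp.
- move=> l Hl; split; apply: op_eqP => h [x z]; rewrite opfM /= /tm /ts /qv /=.
  + have [[Hx E]|NA] := pselect (coh x /\ x (kd l) = l); last by rewrite !(asbF NA) ifK0.
    have E' : x (deg0 k) = kr l by rewrite (coh_r (kd l) Hx) E.
    by rewrite (asbT (conj Hx E')) (asbT (conj Hx E)).
  + have [[Hx E]|NA] := pselect (coh x /\ x (kd l) = l); last by rewrite !(asbF NA).
    have E' : pshift (kd l) x (deg0 k) = ks l by rewrite shift_r // E.
    by rewrite (asbT (conj Hx E)) (asbT (conj (coh_shift _ Hx) E')).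
  + have [[Hx E]|NA] := pselect (coh x /\ ks l = x (deg0 k)); last by rewrite !(asbF NA) ifK0.
    by rewrite (asbT (conj Hx E)) (asbT (conj Hx (esym E))).
  + have [[Hx E]|NA] := pselect (coh x /\ ks l = x (deg0 k)); last by rewrite !(asbF NA).
    have E' : pcat l x (deg0 k) = kr l by rewrite cat_r.
    by rewrite (asbT (conj Hx E)) (asbT (conj (coh_cat Hx E) E')).
- move=> l m Hl Hm Hd; apply: op_eqP => h [x z]; rewrite opfM /= /tm /ts /=.
  have [Hx|Hx] := pselect (coh x); last first.
    rewrite asbF; last by move=> [].
    by case: eqP => _; rewrite ?opf0 //= /qv asbF //; move=> [].
  have [E|E] := pselect (ks l = x (deg0 k)); last first.
    rewrite asbF; last by move=> [].
    by case: eqP => _; rewrite ?opf0 //= /qv asbF //; move=> [] _ E'; apply: E.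
  rewrite asbT //= -Hd cat_deg //.
  case: eqP => [<-|Hlm].
    by rewrite asbT /=; [rewrite /qv asbT // shift_cat // zsubK | split=> //; apply: coh_cat].
  by rewrite asbF ?opf0 //; move=> [].
- move=> v n Hv Hn s Hs Hmem; apply: op_eqP => h [x z]; rewrite opf_sum /=.
  have [Hx|Hx] := pselect (coh x); last first.
    rewrite /qv asbF /=; last by move=> [].
    by rewrite big1_seq // => l _; rewrite asbF //; move=> [].
  rewrite [RHS](eq_big_seq (fun l => if x n == l then h (x, z) else 0)); last first.
    move=> l; rewrite Hmem => /andP [/eqP Hl1 /eqP Hl2].
    have [E|NE] := eqVneq (x n) l; last first.
      rewrite asbF // => -[_ E]; by move: NE; rewrite -Hl2 E eqxx.
    have E' : x (kd l) = l by rewrite Hl2.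
    have E2 : ks l = pshift (kd l) x (deg0 k) by rewrite shift_r // E'.
    rewrite (asbT (conj Hx E')) (asbT (conj (coh_shift _ Hx) E2)) zaddK.
    by rewrite -{1}E' cat_shift.
  rewrite -big_mkcond /= -(big_filter _ (fun l => x n == l)).
  rewrite /qv /=.
  have [E|E] := pselect (x (deg0 k) = v).
    rewrite asbT //.
    have Hin : x n \in s by rewrite Hmem (proj1 Hx) eqxx andbT -(coh_r n Hx) E.
    rewrite (_ : filter _ s = [:: x n]) ?big_seq1 //.
    by rewrite -(filter_pred1_uniq Hs Hin); apply: eq_filter => l; rewrite eq_sym.
  rewrite asbF; last by move=> [].
  rewrite (_ : filter _ s = [::]) ?big_nil //.
  apply/eqP; rewrite -size_eq0 size_filter -leqn0 leqNgt -has_count; apply/hasP => -[l].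
  rewrite Hmem => /andP [/eqP H1 _] /eqP H2; apply: E.
  by rewrite (coh_r n Hx) H2.
Qed.

Definition h0 : Xt -> R := fun xz => if xz.2 == 0 then 1 else 0.

Lemma eval_sK a0 y b : coh y -> y (deg0 k) = ks a0 ->
  sK Qv Tm b h0 (pcat a0 y, zadd 0 (kd a0)) = if b == a0 then 1 else 0.
Proof.
move=> Hy Ey; have Hx := coh_cat Hy (esym Ey).
have Ex := cat_deg Hy (esym Ey).
rewrite /sK; case: ifP => Hb /=.
  rewrite /qv /h0 /= zadd_eq0.
  have [Ev|NEv] := eqVneq b a0.
    subst b; move/eqP: (Hb) => ->; rewrite eqxx asbT //; split=> //.
    by rewrite cat_r // vertex_r.
  have [Ed|NEd] := eqVneq (kd a0) (deg0 k); last by case: (asbool _).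
  rewrite asbF // => -[_ E]; move/eqP: NEv; apply.
  by rewrite -E cat_r // vertex_r //; apply/eqP.
rewrite /tm /h0 /= zsub_eq0.
have [Ev|NEv] := eqVneq b a0.
  by subst b; rewrite asbT ?eqxx.
have [Ed|NEd] := eqVneq (kd a0) (kd b); last by case: (asbool _).
rewrite asbF // => -[_ E]; move/eqP: NEv; apply.
by rewrite -E -Ed.
Qed.
End Rep.

End M_rep.
Import M_rep.

Module M_alg.
Local Open Scope ring_scope.

Section Alg.
Variables (k : nat) (G : kgraph k) (R : comNzRingType) (A : algType R)
  (P S Sst : kmor G -> A).
Hypothesis Hf : is_KP_family P S Sst.
Local Notation sa := (sK P S).
Local Notation sb := (sKs P Sst).

Lemma PP v w : is_vertex v -> is_vertex w -> P v * P w = if v == w then P v else 0.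
Proof.
case: Hf => [[H1 H2] _ _ _ _] Hv Hw.
by case: eqVneq => [<-|Hvw]; [exact: H1 | exact: H2].
Qed.


Lemma sb_sa b b' : kd b = kd b' -> sb b * sa b' = if b == b' then P (ks b) else 0.
Proof.
move=> Hd; rewrite /sKs /sK.
have Hv : is_vertex b = is_vertex b' by rewrite /is_vertex Hd.
rewrite -Hv; case: ifP => Hb.
  have Hb' : is_vertex b' by rewrite -Hv.
  by rewrite PP // vertex_s.
case: Hf => _ _ _ H3 _; have Hb' : is_vertex b' = false by rewrite -Hv.
by apply: H3; rewrite ?Hb ?Hb'.
Qed.

Lemma sb_sa_same b : sb b * sa b = P (ks b).
Proof. by rewrite sb_sa // eqxx. Qed.

Lemma sa_Ps a : sa a * P (ks a) = sa a.
Proof.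
rewrite /sK; case: ifP => Ha.
  by rewrite vertex_s // PP // eqxx.
by case: Hf => _ _ H _ _; case: (H a (negbT Ha)).
Qed.

Lemma P_sa v a : is_vertex v -> P v * sa a = if kr a == v then sa a else 0.
Proof.
move=> Hv; rewrite /sK; case: ifP => Ha.
  by rewrite vertex_r // PP // eq_sym; case: eqP => // ->.
case: Hf => _ _ H _ _; have [H1 _ _ _] := H a (negbT Ha).
case: eqP => [<-//|Hne].
rewrite -H1 mulrA PP ?is_vertex_r //; case: eqP => [E|_]; last by rewrite mul0r.
by case: Hne.
Qed.

Lemma sb_P b w : is_vertex w -> sb b * P w = if kr b == w then sb b else 0.
Proof.
move=> Hw; rewrite /sKs; case: ifP => Hb.
  by rewrite vertex_r // PP //.
case: Hf => _ _ H _ _; have [_ _ _ H1] := H b (negbT Hb).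
case: eqP => [<-//|Hne].
rewrite -H1 -mulrA PP ?is_vertex_r //; case: eqP => [E|_]; last by rewrite mulr0.
by case: Hne.
Qed.

Lemma Pr_sa a : P (kr a) * sa a = sa a.
Proof. by rewrite P_sa ?is_vertex_r // eqxx. Qed.

Lemma KPgen_sa a : KPgen P S Sst (sa a).
Proof. by rewrite /sK; case: ifP => H; [apply: KPgen_P | apply: KPgen_S; rewrite H]. Qed.

End Alg.

End M_alg.
Import M_alg.

Module M_main.
Local Open Scope ring_scope.

Section Main.
Variables (k : nat) (G : kgraph k) (R : comNzRingType) (A : algType R)
  (P S Sst : kmor G -> A).
Hypotheses (Hns : no_sources G) (HKP : is_KP_algebra P S Sst).
Variables (F : seq (kmor G * kmor G)) (rc : kmor G * kmor G -> R) (m : deg k).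
Hypotheses (HFuniq : uniq F) (HFdeg : forall p, p \in F -> kd p.2 = m)
  (HFsrc : forall p, p \in F -> ks p.1 = ks p.2).
Local Notation sa := (sK P S).
Local Notation sb := (sKs P Sst).
Local Notation Mp p := (sa p.1 * sb p.2).

Lemma Hfam : is_KP_family P S Sst. Proof. by case: HKP. Qed.

Lemma hom_sum (B : algType R) (f : A -> B) (I : Type) (s : seq I) (C : pred I) (Fn : I -> A) :
  unital_alg_hom f -> f (\sum_(i <- s | C i) Fn i) = \sum_(i <- s | C i) f (Fn i).
Proof.
case=> fD _ _ _.
have f0 : f 0 = 0.
  by have E := fD 0 0; rewrite addr0 in E; apply: (addrI (f 0)); rewrite -E addr0.
elim: s => [|i s IH]; first by rewrite !big_nil.
by rewrite !big_cons; case: (C i); rewrite ?fD IH.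
Qed.

Lemma sum_pred1 (T : eqType) (V : zmodType) (s : seq T) (a : T) (Fn : T -> V) :
  uniq s -> a \in s -> \sum_(i <- s | i == a) Fn i = Fn a.
Proof.
move=> Hs Ha; rewrite -big_filter.
rewrite (_ : filter _ s = [:: a]) ?big_seq1 //.
by rewrite -(filter_pred1_uniq Hs Ha); apply: eq_filter => l.
Qed.

Lemma mulr_if (x : R) (b : bool) : x * (if b then 1 else 0) = if b then x else 0.
Proof. by case: b; rewrite ?mulr1 ?mulr0. Qed.

Lemma Ind (C : pred (kmor G * kmor G)) :
  \sum_(p <- F | C p) rc p *: Mp p = 0 -> forall p, p \in F -> C p -> rc p = 0.
Proof.
move=> H0 p0 Hp0 Cp0.
have H1 : \sum_(p <- F | C p && (p.2 == p0.2)) rc p *: sa p.1 = 0.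
  transitivity (\sum_(i <- F | C i) rc i *: Mp i * sa p0.2); last first.
    by rewrite -mulr_suml H0 mul0r.
  rewrite big_mkcondr /= big_seq_cond [RHS]big_seq_cond; apply: eq_bigr => p /andP [Hp _].
  rewrite -scalerAl -mulrA (sb_sa Hfam) ?HFdeg //.
  case: eqP => [E|_]; last by rewrite mulr0 scaler0.
  by rewrite -(HFsrc Hp) (sa_Ps Hfam).
have [y [Hy Ey]] := ipath_exists Hns (is_vertex_s p0.1).
case: HKP => _ _ /(_ (Bt R p0.1) _ _ _ (rep_KP R p0.1)) [[f [Hf [fP fS fSst]]] _].
have fsa : forall a, f (sa a) = sK (Qv R p0.1) (Tm R p0.1) a.
  by move=> a; rewrite /sK; case: ifP => Ha; [apply: fP | apply: fS; rewrite Ha].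
have := congr1 f H1; rewrite hom_sum //.
have fZ : forall c x, f (c *: x) = c *: f x by case: Hf.
under eq_bigr => p _ do rewrite fZ fsa.
have f0 : f 0 = 0.
  by case: Hf => fD _ _ _; have E := fD 0 0; rewrite addr0 in E; apply: (addrI (f 0)); rewrite -E addr0.
rewrite f0 => /(congr1 (fun g : Bt R p0.1 => opf g (@h0 _ G R) (pcat p0.1 y, zadd 0 (kd p0.1)))).
rewrite opf_sum opf0 /=.
under eq_bigr => p _ do rewrite (eval_sK R p0.1 _ Hy Ey) mulr_if.
rewrite -big_mkcondr /=.
rewrite (eq_bigl (fun p => p == p0)); last first.
  move=> p /=; apply/idP/eqP => [/andP [/andP [_ /eqP E2] /eqP E1]|->].
    by rewrite [p]surjective_pairing E1 E2 -surjective_pairing.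
  by rewrite Cp0 !eqxx.
by rewrite sum_pred1.
Qed.


Lemma sumL (C : pred (kmor G * kmor G)) v : is_vertex v ->
  P v * (\sum_(p <- F | C p) rc p *: Mp p) = \sum_(p <- F | C p && (kr p.1 == v)) rc p *: Mp p.
Proof.
move=> Hv; rewrite mulr_sumr big_mkcondr; apply: eq_bigr => p _.
rewrite -scalerAr mulrA (P_sa Hfam) //.
by case: eqP => _; rewrite ?mul0r ?scaler0.
Qed.

Lemma sumR (C : pred (kmor G * kmor G)) w : is_vertex w ->
  (\sum_(p <- F | C p) rc p *: Mp p) * P w = \sum_(p <- F | C p && (kr p.2 == w)) rc p *: Mp p.
Proof.
move=> Hw; rewrite mulr_suml big_mkcondr; apply: eq_bigr => p _.
rewrite -scalerAl -mulrA (sb_P Hfam) //.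
by case: eqP => _; rewrite ?mulr0 ?scaler0.
Qed.

Lemma sumSS (C : pred (kmor G * kmor G)) b : kd b = m ->
  (\sum_(p <- F | C p) rc p *: Mp p) * (sa b * sb b) =
  \sum_(p <- F | C p && (p.2 == b)) rc p *: Mp p.
Proof.
move=> Hb; rewrite mulr_suml big_mkcondr big_seq_cond [RHS]big_seq_cond.
apply: eq_bigr => p /andP [Hp _].
rewrite -scalerAl -mulrA (mulrA (sb p.2)) (sb_sa Hfam) ?HFdeg ?Hb //.
case: eqP => [E|_]; last by rewrite !mul0r mulr0 scaler0.
by rewrite mulrA -(HFsrc Hp) (sa_Ps Hfam) E.
Qed.

Variable a : A.
Hypotheses (Hcent : in_KP_center P S Sst a)
  (HFcoef : forall p, p \in F -> rc p != 0)
  (Ha : a = \sum_(p <- F) rc p *: Mp p).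

Lemma acomm b : KPgen P S Sst b -> a * b = b * a.
Proof. by case: Hcent => _; apply. Qed.

Lemma KPgenP v : is_vertex v -> KPgen P S Sst (P v).
Proof. exact: KPgen_P. Qed.

Lemma claim1 p : p \in F -> kr p.1 = kr p.2.
Proof.
move=> Hp; apply/eqP; apply/negP => /negP Hne.
have E : P (kr p.1) * (a * P (kr p.2)) = 0.
  rewrite (acomm (KPgenP (is_vertex_r _))) mulrA (PP Hfam) ?is_vertex_r //.
  by rewrite (negbTE Hne) mul0r.
rewrite Ha sumR ?is_vertex_r // sumL ?is_vertex_r // in E.
have := Ind E Hp; rewrite /= !eqxx => /(_ erefl) /eqP.
by rewrite (negbTE (HFcoef Hp)).
Qed.

Lemma claim2 mu : (exists2 p, p \in F & ks mu = kr p.2) ->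
  exists2 p, p \in F & kr mu = kr p.2.
Proof.
move=> [p Hp Hmu].
have [/hasP [q Hq /eqP E]|Hn] := boolP (has (fun q => kr mu == kr q.2) F).
  by exists q.
exfalso.
have E1 : a * P (kr mu) = 0.
  rewrite Ha sumR ?is_vertex_r //; apply: big1_seq => q /andP [/andP [_ /eqP E] Hq].
  by case/negP: Hn; apply/hasP; exists q => //; rewrite E.
have E2 : sa mu * a = 0.
  by rewrite -(acomm (KPgen_sa P S Sst _)) -(Pr_sa Hfam mu) mulrA E1 mul0r.
have E3 : P (ks mu) * a = 0 by rewrite -(sb_sa_same Hfam mu) -mulrA E2 mulr0.
rewrite Hmu Ha sumL ?is_vertex_r // in E3.
have := Ind E3 Hp; rewrite /= (claim1 Hp) eqxx => /(_ erefl) /eqP.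
by rewrite (negbTE (HFcoef Hp)).
Qed.

Lemma claim3 q : q \in F -> exists2 p, p \in F &
  [/\ kr p.1 = kr p.2, kr p.2 = ks q.1 & ks q.1 = ks q.2].
Proof.
move=> Hq.
have [/hasP [p Hp /eqP E]|Hn] := boolP (has (fun p => kr p.2 == ks q.1) F).
  by exists p => //; split => //; [apply: claim1 | apply: HFsrc].
exfalso.
have E1 : a * P (ks q.2) = 0.
  rewrite Ha sumR ?is_vertex_s //; apply: big1_seq => p /andP [/andP [_ /eqP E] Hp].
  by case/negP: Hn; apply/hasP; exists p => //; rewrite E HFsrc.
have E2 : sa q.2 * a = 0.
  by rewrite -(sa_Ps Hfam q.2) -mulrA -(acomm (KPgenP (is_vertex_s _))) E1 mulr0.
have E3 : a * (sa q.2 * sb q.2) = 0.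
  by rewrite mulrA (acomm (KPgen_sa P S Sst _)) E2 mul0r.
rewrite Ha sumSS ?HFdeg // in E3.
have := Ind E3 Hq; rewrite /= eqxx => /(_ erefl) /eqP.
by rewrite (negbTE (HFcoef Hq)).
Qed.


Lemma claim4 : F != [::] -> exists (p0 : kmor G * kmor G) (ps : seq (kmor G * kmor G)),
  [/\ p0 \in F, all (fun p => p \in F) ps,
      composable_seq p0.2 (map snd ps) &
      kr (kcomp_seq p0.2 (map snd ps)) = ks (kcomp_seq p0.2 (map snd ps))].
Proof.
move=> HF.
have /hasP [q0 Hq0 _] : has predT F by move: HF; case: (F).
pose next (q : kmor G * kmor G) := nth q0 F (find (fun p => kr p.2 == ks q.2) F).
have nextP : forall q, q \in F -> next q \in F /\ kr (next q).2 = ks q.2.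
  move=> q Hq; have [p Hp [_ E1 E2]] := claim3 Hq.
  have Hh : has (fun p => kr p.2 == ks q.2) F by apply/hasP; exists p => //; rewrite E1 E2.
  split; first by rewrite /next mem_nth // -has_find.
  by apply/eqP; exact: (nth_find q0 Hh).
pose itn t := iter t next q0.
have itn_in : forall t, itn t \in F.
  by elim=> [//|t IH]; rewrite /itn iterS; exact: (proj1 (nextP _ IH)).
have itnS : forall t, kr (itn t.+1).2 = ks (itn t).2.
  by move=> t; rewrite /itn iterS; exact: (proj2 (nextP _ (itn_in t))).
pose s := map itn (iota 0 (size F).+1).
have : ~~ uniq s.
  apply/negP => U.
  have Hsub : {subset s <= F} by move=> x /mapP [t _ ->].
  by have := uniq_leq_size U Hsub; rewrite size_map size_iota ltnn.
case/(uniqPn q0) => i [j [Hij Hj]].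
rewrite size_map size_iota in Hj.
rewrite !(nth_map 0) ?size_iota //; last by apply: ltn_trans Hj.
rewrite !nth_iota ?add0n //; last by apply: ltn_trans Hj.
move=> Eij.
set n := (j - i.+1)%N.
have Hjn : j = (i + n)%N.+1 by rewrite /n; lia.
have Hpath : forall n i, path (fun x y => ks x == kr y) (itn i).2
    [seq (itn t).2 | t <- iota i.+1 n].
  elim=> [//|n' IH] i' /=; apply/andP; split; last exact: IH.
  by rewrite -[next (itn i')]/(itn i'.+1) itnS.
have Hlast : forall n i, last (itn i).2 [seq (itn t).2 | t <- iota i.+1 n] = (itn (i + n)%N).2.
  elim=> [|n' IH] i' /=; first by rewrite addn0.
  by rewrite -addSnnS; exact: IH.
have Hks : forall (bs : seq (kmor G)) (b0 : kmor G), composable_seq b0 bs ->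
    kr (kcomp_seq b0 bs) = kr b0 /\ ks (kcomp_seq b0 bs) = ks (last b0 bs).
  move=> bs; elim: bs => [|b bs IH] b0.
    by move=> _; split.
  rewrite /composable_seq /= => /andP [/eqP H1 H2].
  have H3 : composable_seq (kcomp b0 b) bs.
    by move: H2; rewrite /composable_seq; case: bs {IH} => //= c bs; rewrite ks_comp.
  have [E1 E2] := IH _ H3; rewrite /kcomp_seq /= in E1 E2 *.
  rewrite E1 E2 kr_comp //; split=> //.
  by case: bs {IH H2 H3 E1 E2} => //=; rewrite ks_comp.
exists (itn i), [seq itn t | t <- iota i.+1 n].
have Hmap : map snd [seq itn t | t <- iota i.+1 n] = [seq (itn t).2 | t <- iota i.+1 n].
  by rewrite -map_comp.
have Hc : composable_seq (itn i).2 (map snd [seq itn t | t <- iota i.+1 n]).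
  by rewrite Hmap; apply: Hpath.
split=> //.
- by apply/allP => x /mapP [t _ ->].
have [E1 E2] := Hks _ _ Hc.
rewrite E1 E2 Hmap Hlast -itnS -Hjn.
by rewrite -Eij.
Qed.

End Main.


End M_main.
Import M_main.
Unset Implicit Arguments.
Local Open Scope ring_scope.

Theorem lemma4p2 (k : nat) (G : kgraph k) (R : comNzRingType) (A : algType R)
    (P S Sst : kmor G -> A)
    (Hrf : row_finite G) (Hns : no_sources G)
    (HKP : is_KP_algebra P S Sst)
    (a : A) (Ha0 : a != 0) (Hcent : in_KP_center P S Sst a)
    (F : seq (kmor G * kmor G)) (rc : kmor G * kmor G -> R) (m : deg k)
    (HFuniq : uniq F)
    (HFdeg : forall p, p \in F -> kd p.2 = m)
    (HFcoef : forall p, p \in F -> rc p != 0)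
    (HFsrc : forall p, p \in F -> ks p.1 = ks p.2)
    (Ha : a = \sum_(p <- F) rc p *: (sK P S p.1 * sKs P Sst p.2)) :
  [/\ (* (1) *)
      (forall p, p \in F -> kr p.1 = kr p.2),
      (* (2) W = { r(beta) : (alpha,beta) in F } is hereditary upwards *)
      (forall mu : kmor G, (exists2 p, p \in F & ks mu = kr p.2) ->
         exists2 p, p \in F & kr mu = kr p.2),
      (* (3) *)
      (forall q, q \in F -> exists2 p, p \in F &
         [/\ kr p.1 = kr p.2, kr p.2 = ks q.1 & ks q.1 = ks q.2]) &
      (* (4) l = (size ps).+1 >= 1 pairs whose betas compose to a closed path *)
      (exists (p0 : kmor G * kmor G) (ps : seq (kmor G * kmor G)),
         [/\ p0 \in F, all (fun p => p \in F) ps,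
             composable_seq p0.2 (map snd ps) &
             kr (kcomp_seq p0.2 (map snd ps)) = ks (kcomp_seq p0.2 (map snd ps))])].
Proof.
split.
- exact: (claim1 Hns HKP HFuniq HFdeg HFsrc Hcent HFcoef Ha).
- exact: (claim2 Hns HKP HFuniq HFdeg HFsrc Hcent HFcoef Ha).
- exact: (claim3 Hns HKP HFuniq HFdeg HFsrc Hcent HFcoef Ha).
- apply: (claim4 Hns HKP HFuniq HFdeg HFsrc Hcent HFcoef Ha).
  by apply: contraNneq Ha0 => EF; rewrite Ha EF big_nil.
Qed.
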